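(* Let $(X,d)$ be a metric space, $\mu$ a non-atomic Borel measure on $X$, $m$ a Borel measure on $X$ and $0<p<\infty$. If $\rho$ is a $p$-weak upper gradient of a function $f$ and $\varepsilon>0$, then there exists an upper gradient $\rho_\varepsilon$ of $f$ (with respect to $\Gamma^\mu$) such that $\rho_\varepsilon\ge\rho$ and $\|\rho-\rho_\varepsilon\|_{L^p(m)}<\varepsilon$.
   Context: A path is a continuous map $\gamma:[a,b]\to X$; a subpath is a restriction to a subinterval, trivial if that interval is a point; $\mathrm{Im}(\gamma)=\gamma([a,b])$. $\mu$ non-atomic: $\mu(\{x\})=0$ for all $x$. $\Gamma^\mu$ is the set of all non-trivial injective paths $\gamma$ with $0<\mu(\mathrm{Im}(\tilde\gamma))<\infty$ for every non-trivial subpath $\tilde\gamma$. For Borel $g\ge0$, $\int_\gamma g:=\int_{\mathrm{Im}(\gamma)}g\,d\mu$. For $\Gamma\subset\Gamma^\mu$, $\mathrm{Mod}_p(\Gamma)=\inf\int_Xg^p\,dm$ over Borel $g:X\to[0,\infty]$ with $\int_\gamma g\ge1$ for all $\gamma\in\Gamma$; a property holds for $p$-almost every path if the set of paths in $\Gamma^\mu$ where it fails has $p$-modulus zero. A Borel $\rho:X\to[0,\infty]$ is an upper gradient of $f:X\to[-\infty,\infty]$ with respect to $\Gamma^\mu$ if $|f(x)-f(y)|\le\int_\gamma\rho$ for every $\gamma\in\Gamma^\mu$ with endpoints $x,y$ such that $f(x),f(y)$ are finite; it is a $p$-weak upper gradient if $|f(x)-f(y)|\le\int_\gamma\rho$ for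 $p$-almost every $\gamma\in\Gamma^\mu$ with endpoints $x,y$. *)

(* Defs.v *)
From HB Require Import structures.
From mathcomp Require Import all_boot all_order all_algebra.
From mathcomp Require Import all_classical all_reals all_analysis.
From mathcomp Require Import measurable_realfun.
Set Implicit Arguments. Unset Strict Implicit. Unset Printing Implicit Defensive.
Import Order.TTheory GRing.Theory Num.Theory.
Import numFieldNormedType.Exports.
Local Open Scope classical_set_scope.
Local Open Scope ring_scope.

(* Metric spaces with a chosen point (needed because measurable types in
   MathComp-Analysis are pointed). *)
#[short(type="pmetricType")]
HB.structure Definition PointedMetric (K : numDomainType) :=
  { M of Pointed M & Metric K M }.

Definition borel_gen {R : realType} (X : pmetricType R) : set (set X) := @open X.
Arguments borel_gen {R} X.
Notation Borel X := (g_sigma_algebraType (borel_gen X)).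

Section paths.
Context {R : realType} {X : pmetricType R}.
Local Open Scope ereal_scope.

(* A path gamma : [a,b] -> X, represented by its endpoints a <= b and a map
   R -> X (only its values on [a,b] matter). *)
Record path := Path { pa : R; pb : R; pfun : R -> X }.

Definition is_path (g : path) : Prop :=
  (pa g <= pb g)%R /\ {within `[pa g, pb g], continuous (pfun g)}.

Definition img (g : path) (c d : R) : set X := pfun g @` `[c, d].
Definition Im (g : path) : set X := img g (pa g) (pb g).

Variable mu : {measure set (Borel X) -> \bar R}.

Definition nonatomic : Prop := forall x : Borel X, mu [set x] = 0.

Definition GammaMu : set path :=
  [set g | is_path g /\ (pa g < pb g)%R /\
           {in `[pa g, pb g] &, injective (pfun g)} /\
           (forall c d : R, (pa g <= c)%R -> (c < d)%R -> (d <= pb g)%R ->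
              0 < mu (img g c d) < +oo)].

Definition lineint (g : path) (rho : Borel X -> \bar R) : \bar R :=
  \int[mu]_(x in (Im g : set (Borel X))) rho x.

Definition Borel_nonneg (rho : Borel X -> \bar R) : Prop :=
  measurable_fun setT rho /\ forall x, 0 <= rho x.

Variable m : {measure set (Borel X) -> \bar R}.
Variable p : R.

Definition Modp (Gam : set path) : \bar R :=
  ereal_inf [set \int[m]_x (g x `^ p) | g in
    [set g : Borel X -> \bar R | Borel_nonneg g /\
       forall gam, Gam gam -> 1 <= lineint gam g]].

Definition pae (P : path -> Prop) : Prop :=
  Modp [set gam | GammaMu gam /\ ~ P gam] = 0.

Definition upper_gradient (f : X -> \bar R) (rho : Borel X -> \bar R) : Prop :=
  Borel_nonneg rho /\
  forall gam, GammaMu gam ->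
    f (pfun gam (pa gam)) \is a fin_num -> f (pfun gam (pb gam)) \is a fin_num ->
    `| f (pfun gam (pa gam)) - f (pfun gam (pb gam)) | <= lineint gam rho.

Definition weak_upper_gradient (f : X -> \bar R) (rho : Borel X -> \bar R) : Prop :=
  Borel_nonneg rho /\
  pae (fun gam => `| f (pfun gam (pa gam)) - f (pfun gam (pb gam)) | <= lineint gam rho).

End paths.

(* difference b - a of [0,oo]-valued quantities with a <= b, using the
   convention oo - oo = 0 *)
Definition ediff {R : realType} (b a : \bar R) : \bar R :=
  if a == +oo%E then 0%E else (b - a)%E.

(* Main.v *)
Require Import Defs.
From HB Require Import structures.
From mathcomp Require Import all_boot all_order all_algebra.
From mathcomp Require Import all_classical all_reals all_analysis.
From mathcomp Require Import measurable_realfun.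
Import Order.TTheory GRing.Theory Num.Theory.
Local Open Scope classical_set_scope.
Local Open Scope ring_scope.

Section helpers.
Context {R : realType}.
Local Open Scope ereal_scope.

Lemma le_poweR (x y : \bar R) (r : R) : (0 < r)%R -> 0 <= x -> x <= y ->
  x `^ r <= y `^ r.
Proof.
move=> r0; case: x => [x| |] //; case: y => [y| |] //.
- move=> x0 xy; rewrite !poweR_EFin lee_fin.
  apply: (ge0_ler_powR (ltW r0)).
  + by rewrite nnegrE -lee_fin.
  + by rewrite nnegrE -lee_fin (le_trans x0).
  + by rewrite -lee_fin.
- by move=> _ _; rewrite poweRyr ?gt_eqF// leey.
Qed.

Lemma poweRK (x : \bar R) (r : R) : (0 < r)%R -> 0 <= x -> (x `^ r) `^ r^-1 = x.
Proof. by move=> r0 x0; rewrite -poweRrM mulfV ?gt_eqF// poweRe1. Qed.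

Lemma poweRKV (x : \bar R) (r : R) : (0 < r)%R -> 0 <= x -> (x `^ r^-1) `^ r = x.
Proof. by move=> r0 x0; rewrite -poweRrM mulVf ?gt_eqF// poweRe1. Qed.

Lemma term_le_nneseries (u : (\bar R)^nat) n : (forall k, 0 <= u k) ->
  u n <= \sum_(0 <= i <oo) u i.
Proof.
move=> u0; apply: le_trans (nneseries_lim_ge n.+1 _); last by move=> *; exact: u0.
rewrite big_nat_recr//= leeDr//; exact: sume_ge0.
Qed.

Lemma ge0_le_integral_gen d (T : measurableType d) (mu : {measure set T -> \bar R})
  (D : set T) (f g : T -> \bar R) :
  (forall x, 0 <= f x) -> (forall x, f x <= g x) ->
  \int[mu]_(x in D) f x <= \int[mu]_(x in D) g x.
Proof.
move=> f0 fg.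
have g0 x : 0 <= g x by exact: le_trans (f0 x) (fg x).
rewrite (@ge0_integralE _ _ _ mu D f (fun x _ => f0 x)) (@ge0_integralE _ _ _ mu D g (fun x _ => g0 x)) /=.
apply: le_ereal_sup => _ [h /= hf <-]; exists h => //= x.
apply: le_trans (hf x) _; rewrite /patch; case: ifP => // _; exact: fg.
Qed.

End helpers.

Lemma Im_measurable (R : realType) (X : pmetricType R) (g : @Defs.path R X) :
  is_path g -> measurable (Defs.Im g : set (Borel X)).
Proof.
case=> _ cg.
have cI : compact (Defs.Im g) := continuous_compact cg (@segment_compact _ _ _).
have clI : closed (Defs.Im g) := compact_closed (@metric_hausdorff _ X) cI.
rewrite -[Defs.Im g]setCK; apply: measurableC; apply: sub_sigma_algebra.
exact: closed_openC.
Qed.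

Theorem proposition3p5 (R : realType) (X : pmetricType R)
    (mu m : {measure set (Borel X) -> \bar R}) (p : R)
    (f : X -> \bar R) (rho : Borel X -> \bar R) (eps : R) :
  nonatomic mu -> 0 < p ->
  weak_upper_gradient mu m p f rho -> 0 < eps ->
  exists rho_eps : Borel X -> \bar R,
    upper_gradient mu f rho_eps /\
    (forall x, rho x <= rho_eps x)%E /\
    ('N[m]_(p%:E)[(fun x => ediff (rho_eps x) (rho x))] < eps%:E)%E.
Proof.
move=> _ p0 [[mrho rho0] Hpae] eps0.
pose P := fun gam : @Defs.path R X =>
  (`| f (pfun gam (pa gam)) - f (pfun gam (pb gam)) | <= lineint mu gam rho)%E.
move: Hpae; rewrite /pae -/P => Hpae.
pose B : R := (eps / 2) `^ p.
have B0 : 0 < B by rewrite powR_gt0// divr_gt0.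
pose t n : R := (B / (2 ^ n.+1)%:R) / (n.+1%:R `^ p).
have t0 n : 0 < t n by rewrite /t !divr_gt0// ?powR_gt0// ltr0n expn_gt0.
have ex_g : forall n, exists g : Borel X -> \bar R,
    (Borel_nonneg g /\ forall gam, (GammaMu mu gam /\ ~ P gam) -> (1 <= lineint mu gam g)%E)
    /\ (\int[m]_x (g x `^ p) < (t n)%:E)%E.
  move=> n; have : (Modp mu m p [set gam | GammaMu mu gam /\ ~ P gam] < (t n)%:E)%E.
    by rewrite Hpae lte_fin.
  by rewrite /Modp => /ereal_inf_lt [_ [g Ag <-] lt]; exists g.
have [gs Hgs] := choice ex_g.
have gs0 n x : (0 <= gs n x)%E by have [[[_ ?] _] _] := Hgs n.
have mgs n : measurable_fun setT (gs n) by have [[[? _] _] _] := Hgs n.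
pose G n x := ((n.+1%:R)%:E * gs n x)%E.
have G0 n x : (0 <= G n x)%E by rewrite mule_ge0.
have mG n : measurable_fun setT (G n) by exact: measurable_funeM.
pose S x := (\sum_(0 <= n <oo) (G n x) `^ p)%E.
have S0 x : (0 <= S x)%E by apply: nneseries_ge0 => *; exact: poweR_ge0.
have mS : measurable_fun setT S.
  apply: ge0_emeasurable_sum => [k x _ _|k _]; first exact: poweR_ge0.
  exact: (measurableT_comp (@measurable_poweR _ p) (mG k)).
pose h x := (S x `^ p^-1)%E.
have h0 x : (0 <= h x)%E by exact: poweR_ge0.
have mh : measurable_fun setT h by exact: (measurableT_comp (@measurable_poweR _ p^-1) mS).
have hG n x : (G n x <= h x)%E.
  rewrite -(poweRK _ _ p0 (G0 n x)); apply: le_poweR; first by rewrite invr_gt0.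
    exact: poweR_ge0.
  exact: (term_le_nneseries (fun k => (G k x `^ p)%E) n (fun k => poweR_ge0 _ _)).
exists (fun x => rho x + h x)%E.
split; [split; [split|]|split].
- exact: emeasurable_funD.
- by move=> x; rewrite adde_ge0.
- move=> gam Ggam fa fb.
  case: (pselect (P gam)) => Pg.
    apply: le_trans Pg _; apply: ge0_le_integral_gen => x; first exact: rho0.
    exact: leeDl.
  have mI : measurable (Defs.Im gam : set (Borel X)) by apply: Im_measurable; case: Ggam.
  have Hn n : ((n.+1%:R)%:E <= lineint mu gam h)%E.
    apply: (@le_trans _ _ (lineint mu gam (G n))); last first.
      apply: ge0_le_integral_gen => x; [exact: G0|exact: hG].
    rewrite /lineint /G ge0_integralZl//; last exact: measurable_funS (mgs n).
    have [[_ adm] _] := Hgs n.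
    by rewrite -{1}(mule1 (_%:E)) lee_pmul2l// ?lte_fin ?ltr0n//; apply: adm.
  have -> : lineint mu gam (fun x => rho x + h x)%E = +oo%E.
    apply/eqP; rewrite eq_le leey /=.
    apply: (@le_trans _ _ (lineint mu gam h)); last first.
      apply: ge0_le_integral_gen => x; [exact: h0|exact: leeDr].
    move: (Hn 0%N); case E: (lineint mu gam h) => [r| |]//= _.
    have := Hn (Num.truncn r); rewrite E lee_fin => /(lt_le_trans (truncnS_gt r)).
    by rewrite ltxx.
  exact: leey.
- by move=> x; exact: leeDl.
- pose ed x := ediff (rho x + h x)%E (rho x).
  have ed0 x : (0 <= ed x <= h x)%E.
    rewrite /ed /ediff; case: eqP => [_|rnoo]; first by rewrite lexx h0.
    have rfin : rho x \is a fin_num by rewrite ge0_fin_numE// ltey; apply/eqP.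
    by rewrite [(rho x + h x)%E]addeC addeK// h0 lexx.
  rewrite unlock -/ed.
  have int_le : (\int[m]_x `|ed x| `^ p <= B%:E)%E.
    apply: (@le_trans _ _ (\int[m]_x (h x `^ p))%E).
      apply: ge0_le_integral_gen => x; first exact: poweR_ge0.
      have /andP[e0 eh] := ed0 x.
      by apply: le_poweR => //; rewrite gee0_abs.
    under eq_integral do rewrite poweRKV//.
    rewrite /S integral_nneseries//; last first.
      - by move=> n x _; exact: poweR_ge0.
      - by move=> n; exact: (measurableT_comp (@measurable_poweR _ p) (mG n)).
    apply: (@le_trans _ _ (\sum_(0 <= n <oo) ((B / (2 ^ n.+1)%:R)%:E))%E); last first.
      by apply: epsilon_trick0; exact: ltW.
    apply: lee_nneseries => [n _ _|n _].
      by apply: integral_ge0 => x _; exact: poweR_ge0.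
    rewrite /G.
    under eq_integral do rewrite poweRM// ?lee_fin// poweR_EFin.
    rewrite ge0_integralZl//; last 2 first.
      - exact: (measurableT_comp (@measurable_poweR _ p) (mgs n)).
      - by move=> x _; exact: poweR_ge0.
    have [_ lt] := Hgs n.
    apply: (@le_trans _ _ ((n.+1%:R `^ p)%:E * (t n)%:E)%E).
      by rewrite lee_pmul2l ?lte_fin ?powR_gt0 ?ltr0n// ltW.
    by rewrite -EFinM /t mulrC divfK// gt_eqF// powR_gt0// ltr0n.
  apply: (@le_lt_trans _ _ ((B%:E) `^ p^-1)%E).
    apply: le_poweR => //; first by rewrite invr_gt0.
    by apply: integral_ge0 => x _; exact: poweR_ge0.
  rewrite poweR_EFin /B -powRrM mulfV ?gt_eqF// powRr1 ?divr_ge0 ?ltW// lte_fin.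
  by rewrite ltr_pdivrMr// ltr_pMr// ltr1n.
Qed.
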